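(* Let $p(x,y)\in\mathbb{C}[x,y]$ be a nonzero homogeneous polynomial with $p(1,0)\neq0$, and let $\mathcal{Z}$ be the set of distinct complex roots of $p(x,1)$. Suppose there are five distinct $z_1,z_2,z_3,z_4,z_5\in\mathcal{Z}$ such that both $(z_1,z_2,z_3,z_4)$ and $(z_1,z_2,z_3,z_5)$ are critical with respect to $\mathcal{Z}$. Then every element of $\mathrm{Stab}_{\mathrm{GL}_2(\mathbb{C})}(p(x,y))$ is a scalar matrix (i.e. the image of the stabilizer in $\mathrm{PGL}_2(\mathbb{C})$ is trivial).
   Context: $\mathrm{GL}_2(\mathbb{C})$ acts on $\mathbb{C}[x,y]$ by $A\cdot p(x,y)=p(ax+by,cx+dy)$ for $A=\begin{pmatrix}a&b\\c&d\end{pmatrix}$. The cross ratio of distinct $z_1,z_2,z_3,z_4\in\mathbb{C}$ is $[z_1,z_2,z_3,z_4]=\frac{(z_1-z_3)(z_2-z_4)}{(z_1-z_4)(z_2-z_3)}$. Let $V_4=\{\mathrm{id},(12)(34),(13)(24),(14)(23)\}\subset S_4$. For a set $\mathcal{Z}\subset\mathbb{C}$ with at least four elements, a 4-tuple $\zeta=(z_1,z_2,z_3,z_4)$ of distinct elements of $\mathcal{Z}$ is critical (with respect to $\mathcal{Z}$) if for every 4-tuple $(y_1,y_2,y_3,y_4)$ of distinct elements of $\mathcal{Z}$, $[z_1,z_2,z_3,z_4]=[y_1,y_2,y_3,y_4]$ holds if and only if $(y_1,y_2,y_3,y_4)=(z_{\sigma(1)},z_{\sigma(2)},z_{\sigma(3)},z_{\sigma(4)})$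 for some $\sigma\in V_4$. *)

(* Defs.v *)
(* complex numbers as (Stdlib reals)[i] from mathcomp-real-closed,
   bivariate polynomials as multinomials' {mpoly C[2]} ('X_0 = x, 'X_1 = y). *)
From HB Require Import structures.
From mathcomp Require Import all_boot all_order all_algebra.
From mathcomp Require Import Rstruct complex.
From mathcomp Require Export mpoly.
From Stdlib Require Rdefinitions.

Set Implicit Arguments.
Unset Strict Implicit.
Unset Printing Implicit Defensive.

Import Order.TTheory GRing.Theory Num.Theory.
Local Open Scope ring_scope.

Definition C : numClosedFieldType := complex Rdefinitions.R.

Definition pt2 (a b : C) : 'I_2 -> C := fun i => if i == ord0 then a else b.

(* GL_2(C)-action: (A . p)(x, y) = p(a x + b y, c x + d y) for A = [[a, b], [c, d]]. *)
Definition glact (A : 'M[C]_2) (p : {mpoly C[2]}) : {mpoly C[2]} :=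
  comp_mpoly
    [tuple A 0 0 *: 'X_ord0 + A 0 1 *: 'X_ord_max ;
           A 1 0 *: 'X_ord0 + A 1 1 *: 'X_ord_max] p.

Definition rootsZ (p : {mpoly C[2]}) : C -> Prop := fun z => p.@[pt2 z 1] = 0.

Definition cross_ratio (z1 z2 z3 z4 : C) : C :=
  ((z1 - z3) * (z2 - z4)) / ((z1 - z4) * (z2 - z3)).

Definition distinct4 (z1 z2 z3 z4 : C) : Prop :=
  [/\ z1 <> z2, z1 <> z3, z1 <> z4 & [/\ z2 <> z3, z2 <> z4 & z3 <> z4]].

Definition critical (Z : C -> Prop) (z1 z2 z3 z4 : C) : Prop :=
  [/\ Z z1, Z z2, Z z3, Z z4 & distinct4 z1 z2 z3 z4] /\
  forall y1 y2 y3 y4 : C,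
    Z y1 -> Z y2 -> Z y3 -> Z y4 -> distinct4 y1 y2 y3 y4 ->
    (cross_ratio z1 z2 z3 z4 = cross_ratio y1 y2 y3 y4 <->
       [\/ (y1, y2, y3, y4) = (z1, z2, z3, z4),
           (y1, y2, y3, y4) = (z2, z1, z4, z3),
           (y1, y2, y3, y4) = (z3, z4, z1, z2) |
           (y1, y2, y3, y4) = (z4, z3, z2, z1)]).

(* Main.v *)
Require Import Defs.
From HB Require Import structures.
From mathcomp Require Import all_boot all_order all_algebra.
From mathcomp Require Import mpoly.
From mathcomp Require Import ring.
From mathcomp Require Import Rstruct complex.
Import GRing.Theory.
Local Open Scope ring_scope.

Lemma homog_scale (p : {mpoly C[2]}) d (t : C) (v : 'I_2 -> C) :
  p \is d.-homog -> p.@[fun i => t * v i] = t ^+ d * p.@[v].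
Proof.
move=> /dhomogP hp; rewrite !mevalE mulr_sumr !big_seq; apply: eq_bigr => m /hp hm.
rewrite mulrCA; congr (_ * _).
under eq_bigr do rewrite exprMn.
rewrite big_split /=; congr (_ * _); rewrite -hm prodrXr; congr (_ ^+ _); symmetry; apply: mdegE.

Qed.

Lemma pt2_scale (p : {mpoly C[2]}) d (t a b : C) :
  p \is d.-homog -> p.@[pt2 (t * a) (t * b)] = t ^+ d * p.@[pt2 a b].
Proof.
move=> hp; rewrite -(homog_scale p d t (pt2 a b) hp); apply: meval_eq => i.
by rewrite /pt2; case: (i == ord0).
Qed.

Lemma glact_eval (A : 'M[C]_2) p x y :
  (glact A p).@[pt2 x y] = p.@[pt2 (A 0 0 * x + A 0 1 * y) (A 1 0 * x + A 1 1 * y)].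
Proof.
rewrite /glact comp_mpoly_meval; apply: meval_eq => i.
case: i => [[|[|//]] Hi].
  by rewrite /pt2 /= (tnth_nth 0) /= mevalD !mevalZ !mevalXU.
by rewrite /pt2 /= (tnth_nth 0) /= mevalD !mevalZ !mevalXU.
Qed.

Lemma psi_diff (a b c e x y : C) : c * x + e != 0 -> c * y + e != 0 ->
  (a * x + b) / (c * x + e) - (a * y + b) / (c * y + e) =
  (a * e - b * c) * (x - y) / ((c * x + e) * (c * y + e)).
Proof. move=> hx hy; field. by rewrite hx hy. Qed.

Lemma lagr (c f b z1 z2 z3 : C) :
  c * ((z1 - z2) * (z1 - z3) * (z2 - z3)) =
  (c*z1^+2 + f*z1 - b) * (z2 - z3) - (c*z2^+2 + f*z2 - b) * (z1 - z3) + (c*z3^+2 + f*z3 - b) * (z1 - z2).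
Proof. ring. Qed.
Lemma det22 (A : 'M[C]_2) : \det A = A 0 0 * A 1 1 - A 0 1 * A 1 0.
Proof.
rewrite (expand_det_row _ 0) !big_ord_recl big_ord0 /cofactor.
rewrite !det_mx11 /= !mxE /=.
have l1 : (lift 0 0 : 'I_2) = 1 by apply/val_inj.
have l2 : (lift ord0 0 : 'I_2) = 1 by apply/val_inj.
have l3 : (lift (lift ord0 ord0) 0 : 'I_1.+1) = 0 by apply/val_inj.
have l4 : (lift ord0 ord0 : 'I_2) = 1 by apply/val_inj.
have l5 : (ord0 : 'I_2) = 0 by apply/val_inj.
have l6 : (lift 1 0 : 'I_2) = 0 by apply/val_inj.
rewrite ?l1 ?l2 ?l3 ?l4 ?l5 l6 /= expr0 expr1 addr0; ring.
Qed.

Lemma root_img (p : {mpoly C[2]}) d (a b c e z : C) :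
  p \is d.-homog -> p.@[pt2 1 0] != 0 -> a * e - b * c != 0 ->
  p.@[pt2 (a * z + b) (c * z + e)] = 0 ->
  c * z + e != 0 /\ p.@[pt2 ((a * z + b) / (c * z + e)) 1] = 0.
Proof.
move=> hp h10 hdet H.
have hw : c * z + e != 0.
  apply/eqP => hw0.
  have hu : a * z + b != 0.
    apply/eqP => hu0; move: hdet.
    have -> : a * e - b * c = a * (c * z + e) - c * (a * z + b) by ring.
    by rewrite hu0 hw0 !mulr0 subrr eqxx.
  have := pt2_scale p d (a * z + b) 1 0 hp.
  rewrite hw0 in H; rewrite mulr1 mulr0 H => /esym/eqP.
  by rewrite mulf_eq0 expf_eq0 (negPf hu) (negPf h10) andbF.
split => //.
have := pt2_scale p d (c * z + e) ((a * z + b) / (c * z + e)) 1 hp.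
rewrite mulr1 mulrC divfK // H => /esym/eqP; rewrite mulf_eq0 expf_eq0 (negPf hw) andbF /=.
by move/eqP.
Qed.

Lemma psi_neq (a b c e x y : C) : a * e - b * c != 0 -> c * x + e != 0 -> c * y + e != 0 ->
  x <> y -> (a * x + b) / (c * x + e) <> (a * y + b) / (c * y + e).
Proof.
move=> hd hx hy hxy /eqP; rewrite -subr_eq0 psi_diff //.
rewrite mulf_eq0 invr_eq0 !mulf_eq0 (negPf hd) (negPf hx) (negPf hy) /= subr_eq0 orbF.
by move/eqP.
Qed.

Lemma cr_inv (a b c e z1 z2 z3 z4 : C) : a * e - b * c != 0 ->
  c * z1 + e != 0 -> c * z2 + e != 0 -> c * z3 + e != 0 -> c * z4 + e != 0 ->
  distinct4 z1 z2 z3 z4 ->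
  cross_ratio z1 z2 z3 z4 =
  cross_ratio ((a * z1 + b) / (c * z1 + e)) ((a * z2 + b) / (c * z2 + e))
              ((a * z3 + b) / (c * z3 + e)) ((a * z4 + b) / (c * z4 + e)).
Proof.
move=> hd h1 h2 h3 h4 [d12 d13 d14 [d23 d24 d34]].
have n14 : z1 - z4 != 0 by rewrite subr_eq0; apply/eqP.
have n23 : z2 - z3 != 0 by rewrite subr_eq0; apply/eqP.
rewrite /cross_ratio !psi_diff //; field.
by rewrite hd h1 h2 h3 h4 n14 n23.
Qed.

Lemma fix3 (a b c e z1 z2 z3 : C) : z1 <> z2 -> z1 <> z3 -> z2 <> z3 ->
  (forall z, z = z1 \/ z = z2 \/ z = z3 -> a * z + b = z * (c * z + e)) ->
  [/\ c = 0, b = 0 & e = a].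
Proof.
move=> d12 d13 d23 H.
have F : forall z, z = z1 \/ z = z2 \/ z = z3 -> c * z ^+ 2 + (e - a) * z - b = 0.
  move=> z hz; have := H z hz => h.
  have -> : c * z ^+ 2 + (e - a) * z - b = z * (c * z + e) - (a * z + b) by ring.
  by rewrite h subrr.
have f1 := F z1 (or_introl erefl).
have f2 := F z2 (or_intror (or_introl erefl)).
have f3 := F z3 (or_intror (or_intror erefl)).
have n12 : z1 - z2 != 0 by rewrite subr_eq0; apply/eqP.
have n13 : z1 - z3 != 0 by rewrite subr_eq0; apply/eqP.
have n23 : z2 - z3 != 0 by rewrite subr_eq0; apply/eqP.
have c0 : c = 0.
  have := lagr c (e - a) b z1 z2 z3; rewrite f1 f2 f3 !mul0r subrr addr0.
  move/eqP; rewrite mulf_eq0 !mulf_eq0 (negPf n12) (negPf n13) (negPf n23) /=.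
  by rewrite orbF => /eqP.
have ea : e - a = 0.
  have : (e - a) * (z1 - z2) = (c * z1 ^+ 2 + (e - a) * z1 - b) - (c * z2 ^+ 2 + (e - a) * z2 - b) - c * (z1 ^+ 2 - z2 ^+ 2) by ring.
  rewrite f1 f2 c0 mul0r !subrr => /eqP; rewrite mulf_eq0 (negPf n12) orbF => /eqP //.
have b0 : b = 0.
  have : b = - (c * z1 ^+ 2 + (e - a) * z1 - b) + c * z1 ^+ 2 + (e - a) * z1 by ring.
  by rewrite f1 c0 ea !mul0r oppr0 !addr0.
split => //; apply/eqP; rewrite -subr_eq0; exact/eqP.
Qed.

Lemma scalar22 (A : 'M[C]_2) : A 0 1 = 0 -> A 1 0 = 0 -> A 1 1 = A 0 0 -> is_scalar_mx A.
Proof.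
move=> h01 h10 h11; apply/is_scalar_mxP; exists (A 0 0); apply/matrixP => i j.
rewrite mxE.
have E : forall k : 'I_2, k = 0 \/ k = 1.
  by move=> [[|[|//]] Hk]; [left|right]; apply/val_inj.
by case: (E i) => ->; case: (E j) => ->.
Qed.

Theorem lemma5p1 (p : {mpoly C[2]}) (d : nat) :
  p != 0 -> p \is d.-homog -> p.@[pt2 1 0] != 0 ->
  forall z1 z2 z3 z4 z5 : C,
    rootsZ p z1 -> rootsZ p z2 -> rootsZ p z3 -> rootsZ p z4 -> rootsZ p z5 ->
    distinct4 z1 z2 z3 z4 ->
    [/\ z5 <> z1, z5 <> z2, z5 <> z3 & z5 <> z4] ->
    critical (rootsZ p) z1 z2 z3 z4 ->
    critical (rootsZ p) z1 z2 z3 z5 ->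
    forall A : 'M[C]_2, A \in unitmx -> glact A p = p -> is_scalar_mx A.
Proof.
move=> _ hp h10 z1 z2 z3 z4 z5 r1 r2 r3 r4 r5 dis [n51 n52 n53 n54] c1 c2 A hA hAp.
have hdet : A 0 0 * A 1 1 - A 0 1 * A 1 0 != 0.
  by rewrite -det22 -unitfE -unitmxE.
set a := A 0 0 in hdet *; set b := A 0 1 in hdet *;
set c := A 1 0 in hdet *; set e := A 1 1 in hdet *.
have img : forall z, rootsZ p z -> c * z + e != 0 /\ rootsZ p ((a * z + b) / (c * z + e)).
  move=> z rz; apply: (root_img p d) => //.
  have := glact_eval A p z 1; rewrite hAp !mulr1 -/a -/b -/c -/e => <-; exact: rz.
have [w1 s1] := img z1 r1; have [w2 s2] := img z2 r2; have [w3 s3] := img z3 r3.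
have [w4 s4] := img z4 r4; have [w5 s5] := img z5 r5.
have dis' := dis; case: dis' => [d12 d13 d14 [d23 d24 d34]].
have P := psi_neq a b c e _ _ hdet.
have D1 : distinct4 ((a * z1 + b) / (c * z1 + e)) ((a * z2 + b) / (c * z2 + e))
              ((a * z3 + b) / (c * z3 + e)) ((a * z4 + b) / (c * z4 + e)).
  by split; [apply: P|apply: P|apply: P|split; apply: P].
have D2 : distinct4 ((a * z1 + b) / (c * z1 + e)) ((a * z2 + b) / (c * z2 + e))
              ((a * z3 + b) / (c * z3 + e)) ((a * z5 + b) / (c * z5 + e)).
  split; try (apply: P => //; done); try split; try (apply: P => //; done);
    by apply: P => //; apply: nesym.
have E1 := (proj1 (proj2 c1 _ _ _ _ s1 s2 s3 s4 D1)) (cr_inv a b c e z1 z2 z3 z4 hdet w1 w2 w3 w4 dis).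
have dis5 : distinct4 z1 z2 z3 z5.
  by split; [exact d12|exact d13|exact: nesym n51|split; [exact d23|exact: nesym n52|exact: nesym n53]].
have E2 := (proj1 (proj2 c2 _ _ _ _ s1 s2 s3 s5 D2)) (cr_inv a b c e z1 z2 z3 z5 hdet w1 w2 w3 w5 dis5).
have [f1 f2 f3] : [/\ (a * z1 + b) / (c * z1 + e) = z1, (a * z2 + b) / (c * z2 + e) = z2 &
                    (a * z3 + b) / (c * z3 + e) = z3].
  case: E1 => [[h1 h2 h3 h4]|[h1 h2 h3 h4]|[h1 h2 h3 h4]|[h1 h2 h3 h4]];
  case: E2 => [[g1 g2 g3 g4]|[g1 g2 g3 g4]|[g1 g2 g3 g4]|[g1 g2 g3 g4]];
  solve [split; assumption | exfalso; congruence].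
have g1 : a * z1 + b = z1 * (c * z1 + e) by rewrite -{2}f1 divfK.
have g2 : a * z2 + b = z2 * (c * z2 + e) by rewrite -{2}f2 divfK.
have g3 : a * z3 + b = z3 * (c * z3 + e) by rewrite -{2}f3 divfK.
have [c0 b0 ea] := fix3 a b c e z1 z2 z3 d12 d13 d23
  (fun z hz => match hz with or_introl h => ltac:(rewrite h; exact g1)
     | or_intror (or_introl h) => ltac:(rewrite h; exact g2)
     | or_intror (or_intror h) => ltac:(rewrite h; exact g3) end).
exact: scalar22.
Qed.
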